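(* In the setting described in the context (with $L=[0,1]$), let $q\in\{1,\dots,n\}$ and assume there exists $A\subseteq\mathcal C$ with $|A|=n-q$ and $\nu_q(A)=0$. Define $\mu_*:2^{\mathcal C}\to[0,1]$ by $\mu_*(\mathcal C)=1$, $\mu_*(X)=\nu_q(X)$ if $n-q\le|X|<n$, and $\mu_*(X)=\min_{Y\supsetneq X,\ n-q\le|Y|<n}\nu_q(Y)$ if $|X|<n-q$. Then $\mu_*$ is the lowest (pointwise) among all $q$-minitive capacities $\mu:2^{\mathcal C}\to[0,1]$ satisfying $\max_{1\le k\le N}|S_\mu(x^{(k)})-\alpha^{(k)}|=\nabla_q$.
   Context: Let $\mathcal C=\{1,\dots,n\}$ and $L=[0,1]$. A capacity is a map $\mu:2^{\mathcal C}\to[0,1]$ with $\mu(\emptyset)=0$, $\mu(\mathcal C)=1$, monotone for inclusion; it is $q$-minitive if for all $X$ with $|X|<n-q$, $\mu(X)=\min_{Y\supsetneq X,\ |Y|\ge n-q}\mu(Y)$. Sugeno integral: $S_\mu(x)=\max_{A\subseteq\mathcal C}\min(\min_{i\in A}x_i,\mu(A))$ with $\min_{i\in\emptyset}x_i=1$. Training data: $N$ pairs $(x^{(k)},\alpha^{(k)})$, $x^{(k)}\in[0,1]^n$, $\alpha^{(k)}\in[0,1]$. For $A\subsetneq\mathcal C$, $\gamma_{k,A}=\max_{i\in\mathcal C\setminus A}x^{(k)}_i$. Write $t^+=\max(t,0)$. For $1\le i\le N$ and $A\subsetneq\mathcal C$ with $|A|\ge n-q$, let $\sigma_\epsilon(\alpha^{(i)},\gamma_{l,A},\alpha^{(l)})=\min\big(\tfrac{(\alpha^{(l)}-\alpha^{(i)})^+}{2},(\alpha^{(l)}-\gamma_{l,A})^+\big)$,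 $\nabla_{i,A}=\max\big((\gamma_{i,A}-\alpha^{(i)})^+,\max_{1\le l\le N}\sigma_\epsilon(\alpha^{(i)},\gamma_{l,A},\alpha^{(l)})\big)$, $\nabla_i=\min_{A\subsetneq\mathcal C,\ |A|\ge n-q}\nabla_{i,A}$, and $\nabla_q=\max_{1\le i\le N}\nabla_i$. For $A\subsetneq\mathcal C$ with $|A|\ge n-q$, $\nu_q(A)=\max_{1\le k\le N}\big(\gamma_{k,A}\,\epsilon\,\max(\alpha^{(k)}-\nabla_q,0)\big)$, where $a\,\epsilon\,b=b$ if $a<b$ and $a\,\epsilon\,b=0$ if $a\ge b$. *)

(* Defs.v *)
(* R is an abstract real field, criteria are 'I_n, data indexed by 'I_N. *)
From HB Require Import structures.
From mathcomp Require Import all_boot all_order all_algebra.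
Set Implicit Arguments. Unset Strict Implicit. Unset Printing Implicit Defensive.
Import Order.TTheory GRing.Theory Num.Theory.
Local Open Scope ring_scope.

Section Defs.
Variables (R : realFieldType) (n N : nat).

Definition pos (t : R) : R := Num.max t 0.

Definition eps (a b : R) : R := if a < b then b else 0.

(* gamma_{k,A} = max_{i not in A} x^(k)_i  (A proper, so the range is nonempty) *)
Definition gamma (x : 'I_N -> 'I_n -> R) (k : 'I_N) (A : {set 'I_n}) : R :=
  \big[Num.max/0]_(i in ~: A) x k i.

Definition sigma_eps (ai g al : R) : R :=
  Num.min (pos (al - ai) / 2) (pos (al - g)).

Definition nablaIA (x : 'I_N -> 'I_n -> R) (alpha : 'I_N -> R)
    (i : 'I_N) (A : {set 'I_n}) : R :=
  Num.max (pos (gamma x i A - alpha i))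
          (\big[Num.max/0]_(l : 'I_N) sigma_eps (alpha i) (gamma x l A) (alpha l)).

(* minimum over the (nonempty, for 1 <= q) family of proper A with |A| >= n-q;
   all nablaIA values lie in [0,1] for data in [0,1], so the default 1 is neutral *)
Definition nablaI (q : nat) (x : 'I_N -> 'I_n -> R) (alpha : 'I_N -> R)
    (i : 'I_N) : R :=
  \big[Num.min/1]_(A : {set 'I_n} | (A != setT) && (n - q <= #|A|)%N)
     nablaIA x alpha i A.

Definition nablaQ (q : nat) (x : 'I_N -> 'I_n -> R) (alpha : 'I_N -> R) : R :=
  \big[Num.max/0]_(i : 'I_N) nablaI q x alpha i.

Definition nuQ (q : nat) (x : 'I_N -> 'I_n -> R) (alpha : 'I_N -> R)
    (A : {set 'I_n}) : R :=
  \big[Num.max/0]_(k : 'I_N)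
     eps (gamma x k A) (Num.max (alpha k - nablaQ q x alpha) 0).

Definition mu_star (q : nat) (x : 'I_N -> 'I_n -> R) (alpha : 'I_N -> R)
    (X : {set 'I_n}) : R :=
  if X == setT then 1
  else if (n - q <= #|X|)%N then nuQ q x alpha X
  else \big[Num.min/1]_(Y : {set 'I_n} | [&& X \proper Y, (n - q <= #|Y|)%N
                                          & (#|Y| < n)%N])
          nuQ q x alpha Y.

Definition capacity (mu : {set 'I_n} -> R) : Prop :=
  [/\ mu set0 = 0, mu setT = 1,
      (forall X, 0 <= mu X <= 1) &
      (forall X Y : {set 'I_n}, X \subset Y -> mu X <= mu Y)].

Definition q_minitive (q : nat) (mu : {set 'I_n} -> R) : Prop :=
  forall X : {set 'I_n}, (#|X| < n - q)%N ->
    mu X = \big[Num.min/1]_(Y : {set 'I_n} | (X \proper Y) && (n - q <= #|Y|)%N) mu Y.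

(* Sugeno integral, with min over the empty set equal to 1 *)
Definition sugeno (mu : {set 'I_n} -> R) (y : 'I_n -> R) : R :=
  \big[Num.max/0]_(A : {set 'I_n})
     Num.min (\big[Num.min/1]_(i in A) y i) (mu A).

Definition max_error (mu : {set 'I_n} -> R) (x : 'I_N -> 'I_n -> R)
    (alpha : 'I_N -> R) : R :=
  \big[Num.max/0]_(k : 'I_N) `|sugeno mu (x k) - alpha k|.

End Defs.

(* Main.v *)
Require Import Defs.
From HB Require Import structures.
From mathcomp Require Import all_boot all_order all_algebra.
From mathcomp Require Import zify lra.
Import Order.TTheory GRing.Theory Num.Theory.
Local Open Scope ring_scope.

Section Gen.
Variables (R : realFieldType) (n N : nat).
Implicit Types (x : 'I_N -> 'I_n -> R) (mu : {set 'I_n} -> R) (A B X Y : {set 'I_n}).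

Lemma gamma_ge x k A i : i \notin A -> x k i <= gamma x k A.
Proof. by move=> iA; apply: le_bigmax_cond; rewrite inE. Qed.

Lemma gamma_ge0 x k A : 0 <= gamma x k A.
Proof. exact: bigmax_ge_id. Qed.

Lemma gamma_le x k A c : 0 <= c -> (forall i, i \notin A -> x k i <= c) ->
  gamma x k A <= c.
Proof. by move=> c0 H; apply: bigmax_le => // i; rewrite inE; apply: H. Qed.

Lemma gamma_sub x k A B : A \subset B -> gamma x k B <= gamma x k A.
Proof.
move=> AB; apply: gamma_le; first exact: gamma_ge0.
move=> i iB; apply: gamma_ge; apply/negP => iA; move/negP: iB; apply.
exact: (subsetP AB).
Qed.

Lemma sugeno_ge0 mu y : 0 <= sugeno mu y.
Proof. exact: bigmax_ge_id. Qed.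

(* easy direction of the dual form *)
Lemma sugeno_le mu x k A :
  (forall X Y : {set 'I_n}, X \subset Y -> mu X <= mu Y) ->
  sugeno mu (x k) <= Num.max (gamma x k A) (mu A).
Proof.
move=> mono; apply: bigmax_le => [|B _].
  by rewrite le_max gamma_ge0.
case: (boolP (B \subset A)) => BA.
  by rewrite le_max; apply/orP; right; rewrite ge_min (mono _ _ BA) orbT.
have [i iB iA] : exists2 i, i \in B & i \notin A.
  by move/subsetPn: BA => [i iB iA]; exists i.
rewrite le_max; apply/orP; left; rewrite ge_min; apply/orP; left.
apply: (@le_trans _ _ (x k i)); [exact: bigmin_le_cond | exact: gamma_ge].
Qed.

Lemma sugeno_lb mu x k A b :
  (forall X Y : {set 'I_n}, X \subset Y -> mu X <= mu Y) ->
  b <= sugeno mu (x k) -> gamma x k A < b -> b <= mu A.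
Proof.
move=> mono bS gb.
have b0 : 0 < b by apply: le_lt_trans gb; exact: gamma_ge0.
have [B HB] : exists B, b <= Num.min (\big[Num.min/1]_(i in B) x k i) (mu B).
  apply/existsP; rewrite -[X in is_true X]negbK; apply/negP => /existsPn H.
  have : sugeno mu (x k) < b.
    by apply/bigmax_ltP; split => // B _; rewrite ltNge; apply: H.
  by rewrite ltNge bS.
move: HB; rewrite le_min => /andP[/bigmin_geP [_ HBx] HBm].
apply: le_trans HBm (mono _ _ _).
apply/subsetP => i iB; apply/negPn/negP => iA.
have := HBx i iB; rewrite leNgt => /negP; apply.
apply: (@le_lt_trans _ _ (gamma x k A)) gb; exact: gamma_ge.
Qed.

Lemma sugeno_ge q mu x k b : mu setT = 1 -> q_minitive q mu -> 0 < b <= 1 ->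
  (forall A, A != setT -> (n - q <= #|A|)%N -> gamma x k A < b -> b <= mu A) ->
  b <= sugeno mu (x k).
Proof.
move=> mu1 qmin /andP[b0 b1] H.
set B := [set i | b <= x k i].
apply: (@le_trans _ _ (Num.min (\big[Num.min/1]_(i in B) x k i) (mu B))); last first.
  by rewrite /sugeno; apply: le_bigmax_cond.
rewrite le_min; apply/andP; split.
  by apply/bigmin_geP; split => // i; rewrite inE.
have gB : gamma x k B < b.
  by apply/bigmax_ltP; split => // i; rewrite !inE -ltNge.
case: (eqVneq B setT) => [-> | BT]; first by rewrite mu1.
case: (leqP (n - q) #|B|) => hB; first exact: H.
rewrite (qmin B hB); apply/bigmin_geP; split => // Y /andP[BY hY].
case: (eqVneq Y setT) => [->|YT]; first by rewrite mu1.
apply: H => //.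
exact: le_lt_trans (gamma_sub _ _ _ _ (proper_sub BY)) gB.
Qed.
End Gen.
Arguments gamma_ge {R n N x k A i}.
Arguments gamma_le {R n N x k A c}.
Arguments gamma_sub {R n N x k A B}.
Arguments gamma_ge0 {R n N x k A}.
Arguments sugeno_ge {R n N} q {mu x k b}.
Arguments sugeno_le {R n N mu x k} A.
Arguments sugeno_lb {R n N mu x k A b}.
Arguments sugeno_ge0 {R n mu y}.


Section Spec.
Variables (R : realFieldType) (n N q : nat) (x : 'I_N -> 'I_n -> R) (alpha : 'I_N -> R).
Hypothesis (Hq : (1 <= q <= n)%N).
Hypothesis (Hx : forall k i, 0 <= x k i <= 1).
Hypothesis (Ha : forall k, 0 <= alpha k <= 1).
Implicit Types (A B X Y : {set 'I_n}).

Local Notation nab := (nablaQ q x alpha).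
Local Notation nu := (nuQ q x alpha).
Local Notation ms := (mu_star q x alpha).

Lemma nab_ge0 : 0 <= nab.
Proof. exact: bigmax_ge_id. Qed.

Lemma gamma_le1 k A : gamma x k A <= 1.
Proof. by apply: gamma_le => // i _; case/andP: (Hx k i). Qed.

Lemma nu_ge0 A : 0 <= nu A.
Proof. exact: bigmax_ge_id. Qed.

Lemma nu_le1 A : nu A <= 1.
Proof.
apply: bigmax_le => // k _; rewrite /eps; case: ifP => // _.
rewrite ge_max ler01 andbT.
have := nab_ge0; case/andP: (Ha k) => _ a1 nab0.
by apply: le_trans a1; rewrite lerBlDr lerDl.
Qed.

Lemma nu_mono A B : A \subset B -> nu A <= nu B.
Proof.
move=> AB; apply: le_bigmax2 => k _; rewrite /eps.
case: ifP => h; first by rewrite (le_lt_trans (gamma_sub AB) h).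
by case: ifP => // _; rewrite le_max lexx orbT.
Qed.

Lemma nu_lb k A : gamma x k A < alpha k - nab -> alpha k - nab <= nu A.
Proof.
move=> h; rewrite /nuQ; apply: (bigmax_sup k) => //; rewrite /eps.
have -> : gamma x k A < Num.max (alpha k - nab) 0 by rewrite lt_max h.
by rewrite le_max lexx.
Qed.

Lemma nu_ub A c : 0 <= c ->
  (forall l, gamma x l A < alpha l - nab -> alpha l - nab <= c) -> nu A <= c.
Proof.
move=> c0 H; apply: bigmax_le => // l _; rewrite /eps.
case: ifP => // h; rewrite ge_max c0 andbT.
move: h; rewrite lt_max => /orP[h|h]; first exact: H.
by move: h; rewrite ltNge gamma_ge0.
Qed.

Lemma cardT_n : #|[set: 'I_n]| = n.
Proof. by rewrite cardsT card_ord. Qed.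

Lemma neqT_card A : (A != setT) = (#|A| < n)%N.
Proof.
apply/idP/idP => h.
  by have := proper_card (A := A) (B := setT); rewrite cardT_n properT; apply.
by apply/eqP => AT; move: h; rewrite AT cardT_n ltnn.
Qed.

Lemma msT : ms setT = 1.
Proof. by rewrite /mu_star eqxx. Qed.

Lemma msF A : A != setT -> (n - q <= #|A|)%N -> ms A = nu A.
Proof. by move=> AT hA; rewrite /mu_star (negPf AT) hA. Qed.

Lemma msS A : (#|A| < n - q)%N -> ms A =
  \big[Num.min/1]_(Y : {set 'I_n} | [&& A \proper Y, (n - q <= #|Y|)%N
                                          & (#|Y| < n)%N]) nu Y.
Proof.
move=> hA; have AT : A != setT.
  by rewrite neqT_card; apply: (leq_trans hA); exact: leq_subr.
by rewrite /mu_star (negPf AT) leqNgt hA.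
Qed.

Lemma ms_le1 A : ms A <= 1.
Proof.
rewrite /mu_star; case: ifP => // _; case: ifP => _; first exact: nu_le1.
exact: bigmin_le_id.
Qed.

Lemma ms_ge0 A : 0 <= ms A.
Proof.
rewrite /mu_star; case: ifP => // _; case: ifP => _; first exact: nu_ge0.
by apply/bigmin_geP; split => // Y _; exact: nu_ge0.
Qed.

Lemma ms_le_nu X Y : X \subset Y -> Y != setT -> (n - q <= #|Y|)%N ->
  ms X <= nu Y.
Proof.
move=> XY YT hY.
have XT : X != setT.
  apply/eqP => XT; move: XY; rewrite XT subTset => /eqP YT'.
  by rewrite YT' eqxx in YT.
case: (leqP (n - q) #|X|) => hX; first by rewrite msF //; exact: nu_mono.
rewrite msS //; apply: bigmin_le_cond; rewrite hY -neqT_card YT !andbT.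
rewrite properEcard XY; exact: leq_trans hX hY.
Qed.

Lemma ms_mono X Y : X \subset Y -> ms X <= ms Y.
Proof.
move=> XY; case: (eqVneq Y setT) => [->|YT]; first by rewrite msT ms_le1.
case: (leqP (n - q) #|Y|) => hY; first by rewrite (msF _ YT hY); exact: ms_le_nu.
rewrite (msS _ hY); apply/bigmin_geP; split; first exact: ms_le1.
move=> Z /and3P[YZ hZ ZT]; apply: ms_le_nu => //.
  exact: subset_trans XY (proper_sub YZ).
by rewrite neqT_card.
Qed.

Lemma ms_qmin : q_minitive q ms.
Proof.
move=> X hX; rewrite (msS _ hX); apply/le_anti/andP; split.
  apply/bigmin_geP; split; first exact: bigmin_le_id.
  move=> Y /andP[XY hY]; case: (eqVneq Y setT) => [->|YT].
    by rewrite msT; exact: bigmin_le_id.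
  rewrite (msF _ YT hY); apply: bigmin_le_cond.
  by rewrite XY hY -neqT_card YT.
apply/bigmin_geP; split; first exact: bigmin_le_id.
move=> Y /and3P[XY hY YT]; rewrite -(msF _ _ hY); last by rewrite neqT_card.
by apply: bigmin_le_cond; rewrite XY hY.
Qed.


Lemma sugeno_le1 (mu : {set 'I_n} -> R) (y : 'I_n -> R) : (forall A, mu A <= 1) -> sugeno mu y <= 1.
Proof.
move=> H; apply: bigmax_le => // A _.
by rewrite ge_min H orbT.
Qed.

Hypothesis HA0 : exists A : {set 'I_n}, #|A| = (n - q)%N /\ nu A = 0.

Lemma ms0 : ms set0 = 0.
Proof.
case: HA0 => A0 [cA0 nA0]; apply/le_anti; rewrite ms_ge0 andbT.
have A0T : A0 != setT by rewrite neqT_card cA0; lia.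
by rewrite -nA0; apply: ms_le_nu => //; [exact: sub0set | rewrite cA0].
Qed.

Lemma ms_cap : capacity ms.
Proof.
split; [exact: ms0 | exact: msT | | exact: ms_mono].
by move=> X; rewrite ms_ge0 ms_le1.
Qed.

Lemma err_bound k : `|sugeno ms (x k) - alpha k| <= nab.
Proof.
have nab0 := nab_ge0; case/andP: (Ha k) => a0 a1.
rewrite ler_norml; apply/andP; split.
  suff : alpha k - nab <= sugeno ms (x k) by move=> h; lra.
  case: (leP (alpha k - nab) 0) => h.
    exact: le_trans h sugeno_ge0.
  apply: (sugeno_ge q) msT ms_qmin _ _; first by apply/andP; split; lra.
  by move=> A AT hA hg; rewrite msF //; exact: nu_lb.
suff : sugeno ms (x k) <= alpha k + nab by move=> h; lra.
case: (leP 1 (alpha k + nab)) => h.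
  apply: le_trans h; apply: sugeno_le1; exact: ms_le1.
have hk : nablaI q x alpha k <= nab.
  by rewrite /nablaQ; apply: le_bigmax_cond.
case: (pickP (fun A : {set 'I_n} => [&& A != setT, (n - q <= #|A|)%N &
   nablaIA x alpha k A <= nab])) => [A /and3P[AT hA hAk] | H]; last first.
  have : nab < nablaI q x alpha k.
    apply/bigmin_gtP; split; first lra.
    move=> A /andP[AT hA]; have := H A; rewrite AT hA /= => /negbT.
    by rewrite -ltNge.
  by rewrite ltNge hk.
apply: le_trans (sugeno_le A ms_mono) _.
move: hAk; rewrite /nablaIA ge_max => /andP[h1 h2].
move: h1; rewrite /pos ge_max => /andP[h1 _].
rewrite ge_max; apply/andP; split; first lra.
rewrite msF //; apply: nu_ub; first lra.
move=> l hl; move/bigmax_leP: h2 => [_ /(_ l isT)].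
have p1 : alpha l - alpha k <= pos (alpha l - alpha k) by rewrite /pos le_max lexx.
have p2 : alpha l - gamma x l A <= pos (alpha l - gamma x l A)
  by rewrite /pos le_max lexx.
rewrite /sigma_eps ge_min => /orP[h3|h3]; lra.
Qed.

Lemma err_ms : max_error ms x alpha = nab.
Proof.
have nab0 := nab_ge0.
apply/le_anti/andP; split.
  by apply: bigmax_le => // k _; exact: err_bound.
set e := max_error ms x alpha.
have e0 : 0 <= e by exact: bigmax_ge_id.
have eb : forall k, `|sugeno ms (x k) - alpha k| <= e.
  by move=> k; rewrite /e /max_error; apply: le_bigmax_cond.
rewrite leNgt; apply/negP => he.
case: (pickP (fun i => e < nablaI q x alpha i)) => [i hi | H]; last first.
  have : nab <= e.
    apply/bigmax_leP; split => // i _; have := H i; move/negbT.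
    by rewrite -leNgt.
  by rewrite leNgt he.
have ebi := eb i; rewrite ler_norml in ebi; case/andP: ebi => ebi1 ebi2.
case: HA0 => A0 [cA0 _].
have A0T : A0 != setT by rewrite neqT_card cA0; lia.
case: (pickP (fun A : {set 'I_n} => [&& A != setT, (n - q <= #|A|)%N &
   Num.max (gamma x i A) (ms A) <= alpha i + e])) => [A /and3P[AT hA hAi] | H];
   last first.
  set b := \big[Num.min/1]_(A : {set 'I_n} | (A != setT) && (n - q <= #|A|)%N)
             Num.max (gamma x i A) (ms A).
  have hlt : alpha i + e < 1.
    have := H A0; rewrite A0T cA0 leqnn /= => /negbT; rewrite -ltNge => h.
    apply: lt_le_trans h _; rewrite ge_max gamma_le1 //; exact: ms_le1.
  have hb : alpha i + e < b.
    apply/bigmin_gtP; split => // A /andP[AT hA].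
    by have := H A; rewrite AT hA /= => /negbT; rewrite -ltNge.
  have : b <= sugeno ms (x i).
    apply: (sugeno_ge q) msT ms_qmin _ _.
      apply/andP; split; last exact: bigmin_le_id.
      case/andP: (Ha i) => a0 _; lra.
    move=> A AT hA hg.
    have : b <= Num.max (gamma x i A) (ms A) by apply: bigmin_le_cond; rewrite AT.
    by rewrite le_max leNgt hg.
  move=> h; lra.
move: hAi; rewrite ge_max => /andP[hg hm].
have : e < nablaIA x alpha i A.
  apply: lt_le_trans hi _; apply: bigmin_le_cond; by rewrite AT.
rewrite /nablaIA lt_max => /orP[h|h].
  move: h; rewrite /pos lt_max => /orP[h|h]; lra.
case: (pickP (fun l => e < sigma_eps (alpha i) (gamma x l A) (alpha l)))
  => [l hl | H]; last first.
  have : \big[Num.max/0]_(l : 'I_N) sigma_eps (alpha i) (gamma x l A) (alpha l) <= e.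
    apply/bigmax_leP; split => // l _; have := H l; move/negbT.
    by rewrite -leNgt.
  by rewrite leNgt h.
move: hl; rewrite /sigma_eps lt_min => /andP[h1 h2].
have p1 : alpha l - alpha i > e + e.
  move: h1; rewrite /pos.
  case: (leP (alpha l - alpha i) 0) => h0.
    have : Num.max (alpha l - alpha i) 0 <= 0 by rewrite ge_max h0 lexx.
    move=> hM h1; lra.
  have : Num.max (alpha l - alpha i) 0 <= alpha l - alpha i.
    by rewrite ge_max lexx ltW.
  move=> hM h1; lra.
have p2 : gamma x l A < alpha l - e.
  move: h2; rewrite /pos lt_max => /orP[h2|h2]; lra.
have ebl := eb l; rewrite ler_norml in ebl; case/andP: ebl => ebl1 ebl2.
have := sugeno_lb ms_mono (_ : alpha l - e <= sugeno ms (x l)) p2.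
move=> /(_ ltac:(lra)) h3; lra.
Qed.

Lemma ms_minimal (mu : {set 'I_n} -> R) :
  capacity mu -> q_minitive q mu -> max_error mu x alpha = nab ->
  forall X : {set 'I_n}, ms X <= mu X.
Proof.
case=> mu0 mu1 mub mumono qmin err X.
have lb : forall k, alpha k - nab <= sugeno mu (x k).
  move=> k; have : `|sugeno mu (x k) - alpha k| <= nab.
    by rewrite -err /max_error; apply: le_bigmax_cond.
  by rewrite ler_norml => /andP[h _]; lra.
have hF : forall A, nu A <= mu A.
  move=> A; apply: nu_ub; first by case/andP: (mub A).
  by move=> l hl; apply: sugeno_lb mumono (lb l) hl.
case: (eqVneq X setT) => [->|XT]; first by rewrite msT mu1.
case: (leqP (n - q) #|X|) => hX; first by rewrite msF.
rewrite (qmin X hX); apply/bigmin_geP; split; first exact: ms_le1.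
move=> Y /andP[XY hY]; case: (eqVneq Y setT) => [->|YT].
  by rewrite mu1 ms_le1.
apply: le_trans (hF Y); apply: ms_le_nu => //; exact: proper_sub.
Qed.

Lemma main_spec :
  [/\ capacity ms, q_minitive q ms, max_error ms x alpha = nab &
      forall mu : {set 'I_n} -> R,
        capacity mu -> q_minitive q mu ->
        max_error mu x alpha = nab ->
        forall X : {set 'I_n}, ms X <= mu X].
Proof.
split; [exact: ms_cap | exact: ms_qmin | exact: err_ms | exact: ms_minimal].
Qed.

End Spec.

Theorem corollary3 (R : realFieldType) (n N q : nat)
    (x : 'I_N -> 'I_n -> R) (alpha : 'I_N -> R) :
  (0 < N)%N ->
  (1 <= q <= n)%N ->
  (forall k i, 0 <= x k i <= 1) ->
  (forall k, 0 <= alpha k <= 1) ->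
  (exists A : {set 'I_n}, #|A| = (n - q)%N /\ nuQ q x alpha A = 0) ->
  [/\ capacity (mu_star q x alpha),
      q_minitive q (mu_star q x alpha),
      max_error (mu_star q x alpha) x alpha = nablaQ q x alpha &
      forall mu : {set 'I_n} -> R,
        capacity mu -> q_minitive q mu ->
        max_error mu x alpha = nablaQ q x alpha ->
        forall X : {set 'I_n}, mu_star q x alpha X <= mu X].
Proof.
move=> _ Hq Hx Ha HA0; exact: (@main_spec R n N q x alpha Hq Hx Ha HA0).
Qed.
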